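(* Let $\mathcal K^*$ be a reasonable ordered Fraïssé class in the language $L\cup\{<\}$ with $L$-reduct $\mathcal K$, and assume $G_{\mathcal K^*}$ is oligomorphic. If $G_{\mathcal K^*}$ is a normal subgroup of $G_\mathcal K$, then it has finite index in $G_\mathcal K$.
   Context: A Fraïssé class is a class of finite structures that is hereditary, has joint embedding and amalgamation, and contains arbitrarily large finite structures; $\mathrm{Flim}$ denotes the Fraïssé limit and $G_\mathcal K=\mathrm{Aut}(\mathrm{Flim}(\mathcal K))$. An ordered class $\mathcal K^*$ consists of structures $(A,<^A)$ with $<^A$ a linear order on an $L$-structure $A$ ($\mathcal K^*$-admissible orders); its $L$-reduct is $\{A:(A,<^A)\in\mathcal K^*\}$. $\mathcal K^*$ is reasonable if for all $A,B$ in the reduct, every embedding $a:A\to B$ and every admissible $<^A$ on $A$, there is an admissible $<^B$ on $B$ making $a$ an embedding $(A,<^A)\to(B,<^B)$. For reasonable $\mathcal K^*$ one has $\mathrm{Flim}(\mathcal K^* )=(\mathrm{Flim}(\mathcal K),<^* )$ for some linear order $<^*$, and $G_{\mathcal K^*}$ is thereby identified with the subgroup of $G_\mathcal K$ preserving $<^*$. A permutation group on $F$ is oligomorphic if for every $n$ its diagonal action on $F^n$ has finitely many orbits. *)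

(* Defs.v *)
From mathcomp Require Import all_boot.
Set Implicit Arguments. Unset Strict Implicit. Unset Printing Implicit Defensive.

Record lang := Lang {
  rsym : Type; rar : rsym -> nat;
  fsym : Type; far : fsym -> nat }.

Record structure (L : lang) (X : Type) := Struct {
  rinterp : forall r : rsym L, ('I_(rar r) -> X) -> Prop;
  finterp : forall f : fsym L, ('I_(far f) -> X) -> X }.
Arguments rinterp {L X} s r _.
Arguments finterp {L X} s f _.

Definition is_embedding (L : lang) (X Y : Type) (SX : structure L X)
  (SY : structure L Y) (h : X -> Y) : Prop :=
  injective h /\
  (forall r (xs : 'I_(rar r) -> X), rinterp SY r (h \o xs) <-> rinterp SX r xs) /\
  (forall f (xs : 'I_(far f) -> X), h (finterp SX f xs) = finterp SY f (h \o xs)).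

Definition is_automorphism (L : lang) (X : Type) (S : structure L X) (s : X -> X) : Prop :=
  is_embedding S S s /\ bijective s.

Definition sclass (L : lang) := forall A : finType, structure L A -> Prop.

Definition hereditary (L : lang) (K : sclass L) : Prop :=
  forall (A B : finType) (SA : structure L A) (SB : structure L B) (h : A -> B),
    is_embedding SA SB h -> K B SB -> K A SA.

Definition joint_embedding (L : lang) (K : sclass L) : Prop :=
  forall (A B : finType) (SA : structure L A) (SB : structure L B),
    K A SA -> K B SB ->
    exists (C : finType) (SC : structure L C) (f : A -> C) (g : B -> C),
      K C SC /\ is_embedding SA SC f /\ is_embedding SB SC g.

Definition amalgamation (L : lang) (K : sclass L) : Prop :=
  forall (A B C : finType) (SA : structure L A) (SB : structure L B)
         (SC : structure L C) (f : A -> B) (g : A -> C),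
    K A SA -> K B SB -> K C SC -> is_embedding SA SB f -> is_embedding SA SC g ->
    exists (D : finType) (SD : structure L D) (f' : B -> D) (g' : C -> D),
      [/\ K D SD, is_embedding SB SD f', is_embedding SC SD g'
        & forall a, f' (f a) = g' (g a)].

Definition arbitrarily_large (L : lang) (K : sclass L) : Prop :=
  forall n : nat, exists (A : finType) (SA : structure L A), K A SA /\ n <= #|A|.

Definition FraisseClass (L : lang) (K : sclass L) : Prop :=
  [/\ hereditary K, joint_embedding K, amalgamation K & arbitrarily_large K].

(* Fraisse limit of K: a countable structure, locally finite, ultrahomogeneous,
   whose age (finite structures embeddable in it) is exactly K. *)
Definition FraisseLimit (L : lang) (K : sclass L) (M : countType) (S : structure L M) : Prop :=
  [/\ (forall (A : finType) (SA : structure L A),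
          K A SA <-> exists h : A -> M, is_embedding SA S h),
      (forall s : seq M, exists (A : finType) (SA : structure L A) (h : A -> M),
          is_embedding SA S h /\ forall x, x \in s -> exists a, h a = x)
    & (forall (A : finType) (SA : structure L A) (f g : A -> M),
          is_embedding SA S f -> is_embedding SA S g ->
          exists s, is_automorphism S s /\ forall a, s (f a) = g a)].

(* The language L u {<}: a new binary relation symbol (None). *)
Definition Lplus (L : lang) : lang :=
  Lang (fun o : option (rsym L) => if o is Some r then rar r else 2) (@far L).

Definition expand (L : lang) (X : Type) (S : structure L X) (lt : X -> X -> Prop)
  : structure (Lplus L) X :=
  @Struct (Lplus L) X
    (fun o => match o return ('I_(@rar (Lplus L) o) -> X) -> Prop with
              | Some r => rinterp S r
              | None => fun xs : 'I_2 -> X => lt (xs ord0) (xs ord_max)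
              end)
    (finterp S).

Definition restrict (L : lang) (X : Type) (T : structure (Lplus L) X) : structure L X :=
  @Struct L X (fun r => rinterp T (Some r)) (finterp T).

Definition ltof (L : lang) (X : Type) (T : structure (Lplus L) X) (x y : X) : Prop :=
  rinterp T (None : rsym (Lplus L)) (fun i : 'I_2 => if nat_of_ord i == 0 then x else y).

Definition strict_linear (X : Type) (lt : X -> X -> Prop) : Prop :=
  [/\ forall x, ~ lt x x,
      forall x y z, lt x y -> lt y z -> lt x z
    & forall x y, x <> y -> lt x y \/ lt y x].

Definition oclass (L : lang) := forall A : finType, structure L A -> (A -> A -> Prop) -> Prop.

Definition is_ordered (L : lang) (Ks : oclass L) : Prop :=
  forall (A : finType) (SA : structure L A) lt, Ks A SA lt -> strict_linear lt.

Definition oclass_to_class (L : lang) (Ks : oclass L) : sclass (Lplus L) :=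
  fun A T => Ks A (restrict T) (ltof T).

Definition reduct (L : lang) (Ks : oclass L) : sclass L :=
  fun A SA => exists lt, Ks A SA lt.

Definition reasonable (L : lang) (Ks : oclass L) : Prop :=
  forall (A B : finType) (SA : structure L A) (SB : structure L B) (a : A -> B),
    reduct Ks SA -> reduct Ks SB -> is_embedding SA SB a ->
    forall ltA, Ks A SA ltA ->
      exists ltB, Ks B SB ltB /\ is_embedding (expand SA ltA) (expand SB ltB) a.

(* Permutation groups given as predicates on maps M -> M. *)
Definition oligomorphic (M : Type) (H : (M -> M) -> Prop) : Prop :=
  forall n : nat, exists (k : nat) (reps : 'I_k -> 'I_n -> M),
    forall x : 'I_n -> M, exists (i : 'I_k) (h : M -> M),
      H h /\ forall j, x j = h (reps i j).

Definition normal_in (M : Type) (H G : (M -> M) -> Prop) : Prop :=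
  forall g g' h : M -> M, G g -> cancel g g' -> cancel g' g -> H h -> H (g \o h \o g').

Definition finite_index (M : Type) (H G : (M -> M) -> Prop) : Prop :=
  exists (k : nat) (reps : 'I_k -> M -> M),
    (forall i, G (reps i)) /\
    forall g, G g -> exists (i : 'I_k) (h : M -> M), H h /\ forall x, g x = reps i (h x).

(* Main.v *)
Require Import Defs.
From mathcomp Require Import all_boot.
From Stdlib Require Import FunctionalExtensionality ClassicalEpsilon.

Section Aux.
Variables (L : lang) (X : Type).

Lemma aut_inv (T : structure L X) s s' :
  is_automorphism T s -> cancel s s' -> cancel s' s -> is_automorphism T s'.
Proof.
move=> [[_ [Hr Hf]] _] c1 c2; split; last by exists s.
split; first exact: can_inj c2.
split.
- move=> r xs; have := Hr r (s' \o xs).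
  have -> : s \o (s' \o xs) = xs by apply: functional_extensionality => i /=; rewrite c2.
  by move=> H; split => /H.
- move=> f xs; have := Hf f (s' \o xs).
  have -> : s \o (s' \o xs) = xs by apply: functional_extensionality => i /=; rewrite c2.
  by move=> <-; rewrite c1.
Qed.

Lemma aut_comp (T : structure L X) a b :
  is_automorphism T a -> is_automorphism T b -> is_automorphism T (a \o b).
Proof.
move=> [[ia [Hra Hfa]] [a' c1 c2]] [[ib [Hrb Hfb]] [b' d1 d2]]; split; last first.
  by exists (b' \o a') => x /=; rewrite ?c1 ?d1 ?d2 ?c2.
split; first by move=> x y /= /ia /ib.
split.
- move=> r xs; have := Hra r (b \o xs); have := Hrb r xs.
  have -> : a \o (b \o xs) = (a \o b) \o xs by [].
  by move=> H1 H2; split => [/H2/H1|/H1/H2].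
- by move=> f xs /=; rewrite Hfb Hfa.
Qed.

Lemma emb_expand_l (S : structure L X) lt h :
  is_embedding (expand S lt) (expand S lt) h -> is_embedding S S h.
Proof.
move=> [i [Hr Hf]]; split=> //; split.
- by move=> r xs; exact: (Hr (Some r) xs).
- by move=> f xs; exact: (Hf f xs).
Qed.

Lemma emb_expand_lt (S : structure L X) lt h :
  is_embedding (expand S lt) (expand S lt) h -> forall x y, lt (h x) (h y) <-> lt x y.
Proof.
move=> [i [Hr Hf]] x y.
exact: (Hr None (fun i : 'I_2 => if nat_of_ord i == 0 then x else y)).
Qed.

Lemma emb_expand_mk (S : structure L X) lt h :
  is_embedding S S h -> (forall x y, lt (h x) (h y) <-> lt x y) ->
  is_embedding (expand S lt) (expand S lt) h.
Proof.
move=> [i [Hr Hf]] Hl; split=> //; split.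
- case=> [r|] xs /=; first exact: Hr.
  exact: Hl.
- by move=> f xs; exact: (Hf f xs).
Qed.

Lemma aut_expand_l (S : structure L X) lt h :
  is_automorphism (expand S lt) h -> is_automorphism S h.
Proof. by move=> [/emb_expand_l H B]. Qed.

End Aux.

Theorem mainTheorem17 (L : lang) (Ks : oclass L) (M : countType)
  (S : structure L M) (ltM : M -> M -> Prop) :
  is_ordered Ks ->
  FraisseClass (oclass_to_class Ks) ->
  reasonable Ks ->
  FraisseLimit (reduct Ks) S ->
  FraisseLimit (oclass_to_class Ks) (expand S ltM) ->
  oligomorphic (is_automorphism (expand S ltM)) ->
  normal_in (is_automorphism (expand S ltM)) (is_automorphism S) ->
  finite_index (is_automorphism (expand S ltM)) (is_automorphism S).
Proof.
move=> _ _ _ _ _ /(_ 2) [k [orep Horb]] Hnorm.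
pose R (g : M -> M) x y := exists u v, g u = x /\ g v = y /\ ltM u v.
have RE : forall g gi x y, cancel g gi -> cancel gi g ->
    (R g x y <-> ltM (gi x) (gi y)).
  move=> g gi x y c1 c2; split.
    by move=> [u [v [<- [<- H]]]]; rewrite !c1.
  by move=> H; exists (gi x), (gi y); rewrite !c2.
have Rinv : forall g hh a b, is_automorphism S g ->
    is_automorphism (expand S ltM) hh -> (R g (hh a) (hh b) <-> R g a b).
  move=> g hh a b Hg Hh.
  have [gi c1 c2] := Hg.2.
  have Hgi := @aut_inv L M S g gi Hg c1 c2.
  have Hk := Hnorm gi g hh Hgi c2 c1 Hh.
  have L1 := @emb_expand_lt L M S ltM _ Hk.1 (gi a) (gi b).
  rewrite /= !c2 in L1.
  by rewrite !(RE _ _ _ _ c1 c2).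
pose typ (g : M -> M) : {ffun 'I_k -> bool} :=
  [ffun i => if excluded_middle_informative (R g (orep i ord0) (orep i ord_max))
             then true else false].
have typE : forall g i, typ g i = true <-> R g (orep i ord0) (orep i ord_max).
  move=> g i; rewrite /typ ffunE.
  by case: excluded_middle_informative.
have Req : forall g g', is_automorphism S g -> is_automorphism S g' ->
    typ g = typ g' -> forall x y, R g x y <-> R g' x y.
  move=> g g' Hg Hg' Ht x y.
  have [j [hh [Hh Hx]]] := Horb (fun i : 'I_2 => if nat_of_ord i == 0 then x else y).
  have -> : x = hh (orep j ord0) by exact: (Hx ord0).
  have -> : y = hh (orep j ord_max) by exact: (Hx ord_max).
  rewrite (Rinv _ _ _ _ Hg Hh) (Rinv _ _ _ _ Hg' Hh) -!typE Ht; done.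
pose pick (t : {ffun 'I_k -> bool}) : M -> M :=
  match excluded_middle_informative (exists g, is_automorphism S g /\ typ g = t) with
  | left e => proj1_sig (constructive_indefinite_description _ e)
  | right _ => id end.
have Hid : is_automorphism S id.
  split; last by exists id.
  by split=> //; split.
have pickP : forall t, is_automorphism S (pick t) /\
    ((exists g, is_automorphism S g /\ typ g = t) -> typ (pick t) = t).
  move=> t; rewrite /pick; case: excluded_middle_informative => e; last first.
    by split=> // /e.
  by case: (constructive_indefinite_description _ e) => g [H1 H2].
exists #|{ffun 'I_k -> bool}|, (fun i => pick (enum_val i)).
split; first by move=> i; exact: (pickP _).1.
move=> g Hg.
exists (enum_rank (typ g)).
rewrite enum_rankK.
set g' := pick (typ g).
have [Hg' Ht] := pickP (typ g).
have Ht' := Ht (ex_intro _ g (conj Hg erefl)).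
have [gi' c1 c2] := Hg'.2.
exists (gi' \o g); split; last by move=> x /=; rewrite /g' c2.
have Hc := @aut_comp L M S _ _ (@aut_inv L M S g' gi' Hg' c1 c2) Hg.
split; last exact: Hc.2.
apply: (@emb_expand_mk L M S ltM); first exact: Hc.1.
move=> x y /=.
rewrite -(RE _ _ _ _ c1 c2) -(Req _ _ Hg Hg' (esym Ht')).
have [gi d1 d2] := Hg.2.
by rewrite (RE _ _ _ _ d1 d2) !d1.
Qed.
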